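(* Let $U$ be a convex $2n$-gon with distinct vertices $U_1,\dots,U_{2n}$ in counterclockwise order, centered at the origin ($U_{i+n}=-U_i$, indices modulo $2n$), and let $P$ be a convex polygon with nonempty interior with vertex list $P_1,\dots,P_{2n}$ (consecutive entries may coincide) whose sides are parallel to the corresponding sides of $U$, i.e. $P_{i+1}-P_i=\lambda_{i+\frac12}(U_{i+1}-U_i)$ with $\lambda_{i+\frac12}\ge0$ for all $i$. The following statements are equivalent: (1) $P$ has constant $U$-width; (2) $P+(-P)$ is homothetic to $U$; (3) the corresponding diagonals of $U$ and $P$ are parallel, i.e. $P_i-P_{i+n}\parallel U_i-U_{i+n}$ for $1\le i\le n$; (4) there is a constant $a$ with $P_i-P_{i+n}=2a(U_i-U_{i+n})$ for $1\le i\le n$.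
   Context: The dual norm of the norm with unit ball $U$ is identified with $\|v\|=\sup\{[u,v]:u\in U\}$, where $[x,y]$ is the determinant of the matrix with columns $x,y$. For $\|v\|=1$, $h(P)(v)=\sup\{[p,v]:p\in P\}$ and $w(P)(v)=h(P)(v)+h(P)(-v)$; $P$ has constant $U$-width if $w(P)(v)$ is independent of $v$. *)

(* Defs.v *)
From HB Require Import structures.
From mathcomp Require Import all_boot all_order all_algebra.
From mathcomp Require Import all_classical all_reals.
Set Implicit Arguments. Unset Strict Implicit. Unset Printing Implicit Defensive.
Import Order.TTheory GRing.Theory Num.Theory.
Local Open Scope ring_scope.
Local Open Scope classical_set_scope.

Section Defs.
Variable R : realType.
Local Notation pt := 'rV[R]_2.

Definition xc (p : pt) : R := p ord0 ord0.
Definition yc (p : pt) : R := p ord0 ord_max.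

Definition det2 (x y : pt) : R := xc x * yc y - yc x * xc y.

Definition hull (V : nat -> pt) (m : nat) : set pt :=
  [set x | exists w : 'I_m -> R, (forall i, 0 <= w i) /\
      \sum_(i < m) w i = 1 /\ x = \sum_(i < m) w i *: V i].

Definition has_interior (S : set pt) : Prop :=
  exists x : pt, exists e : R, 0 < e /\
    forall y : pt, (xc (y - x)) ^+ 2 + (yc (y - x)) ^+ 2 < e ^+ 2 -> S y.

(* dual norm of the norm with unit ball U: ||v|| = sup {[u,v] : u in U} *)
Definition dnorm (U : set pt) (v : pt) : R := sup [set det2 u v | u in U].

Definition hfun (P : set pt) (v : pt) : R := sup [set det2 p v | p in P].

Definition wfun (P : set pt) (v : pt) : R := hfun P v + hfun P (- v).

Definition constant_width (U P : set pt) : Prop :=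
  exists c : R, forall v : pt, dnorm U v = 1 -> wfun P v = c.

Definition diff_body (A : set pt) : set pt :=
  [set p - q | p in A & q in A].

Definition homothetic (A B : set pt) : Prop :=
  exists (c : pt) (t : R), 0 < t /\ A = [set c + t *: u | u in B].

(* U_0, ..., U_{2n-1} (indices mod 2n) form a convex 2n-gon with distinct
   vertices in counterclockwise order: every other vertex lies strictly to
   the left of each directed edge U_i U_{i+1}. *)
Definition convex_ccw_polygon (U : nat -> pt) (m : nat) : Prop :=
  forall i j : nat, (i < m)%N -> (j < m)%N -> j != i -> j != (i.+1 %% m)%N ->
    0 < det2 (U i.+1 - U i) (U j - U i).

End Defs.

(* Main.v *)
Require Import Defs.
From HB Require Import structures.
From mathcomp Require Import all_boot all_order all_algebra.
From mathcomp Require Import all_classical all_reals.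
From mathcomp Require Import ring lra zify.
Import Order.TTheory GRing.Theory Num.Theory.
Local Open Scope ring_scope.
Set Implicit Arguments. Unset Strict Implicit.

Section H.
Variable R : realType.
Local Notation pt := 'rV[R]_2.

Lemma pt_eq (p q : pt) : xc p = xc q -> yc p = yc q -> p = q.
Proof.
rewrite /xc /yc => h1 h2; apply/matrixP => i j; rewrite (ord1 i).
case: j => -[|[|j]] Hj //.
- by have -> : Ordinal Hj = ord0 by apply: val_inj.
- by have -> : Ordinal Hj = ord_max by apply: val_inj.
Qed.

Lemma xcD (p q : pt) : xc (p + q) = xc p + xc q. Proof. by rewrite /xc mxE. Qed.
Lemma ycD (p q : pt) : yc (p + q) = yc p + yc q. Proof. by rewrite /yc mxE. Qed.
Lemma xcN (p : pt) : xc (- p) = - xc p. Proof. by rewrite /xc mxE. Qed.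
Lemma ycN (p : pt) : yc (- p) = - yc p. Proof. by rewrite /yc mxE. Qed.
Lemma xcZ a (p : pt) : xc (a *: p) = a * xc p. Proof. by rewrite /xc mxE. Qed.
Lemma ycZ a (p : pt) : yc (a *: p) = a * yc p. Proof. by rewrite /yc mxE. Qed.
Lemma xc0 : xc (0 : pt) = 0. Proof. by rewrite /xc mxE. Qed.
Lemma yc0 : yc (0 : pt) = 0. Proof. by rewrite /yc mxE. Qed.

Definition cE := (xcD, ycD, xcN, ycN, xcZ, ycZ, xc0, yc0).

Lemma det2_sum k (w : 'I_k -> R) (x : 'I_k -> pt) v :
  det2 (\sum_i w i *: x i) v = \sum_i w i * det2 (x i) v.
Proof.
rewrite /det2 /xc /yc !summxE !big_distrl /= -sumrB; apply: eq_bigr => i _; rewrite !mxE; ring.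
Qed.

Lemma cramer (a b c : pt) :
  det2 b c *: a + det2 c a *: b + det2 a b *: c = 0.
Proof. apply: pt_eq; rewrite !cE /det2; ring. Qed.

Lemma cramer_s (x y z Y : pt) :
  det2 y z * det2 x Y + det2 z x * det2 y Y + det2 x y * det2 z Y = 0.
Proof. rewrite /det2; ring. Qed.

Lemma det2_zero (x a b : pt) : det2 x a = 0 -> det2 x b = 0 -> det2 a b != 0 -> x = 0.
Proof.
move=> h1 h2 nz.
have e1 : xc x * det2 a b = 0.
  have -> : xc x * det2 a b = xc a * det2 x b - xc b * det2 x a by rewrite /det2; ring.
  by rewrite h1 h2; ring.
have e2 : yc x * det2 a b = 0.
  have -> : yc x * det2 a b = yc a * det2 x b - yc b * det2 x a by rewrite /det2; ring.
  by rewrite h1 h2; ring.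
move/eqP: e1; move/eqP: e2; rewrite !mulf_eq0 (negbTE nz) !orbF => /eqP e2 /eqP e1.
by apply: pt_eq; rewrite ?xc0 ?yc0.
Qed.

End H.

Lemma per_mod (T : Type) (m : nat) (f : nat -> T) :
  (forall x, f (x + m)%N = f x) -> forall x, f x = f (x %% m)%N.
Proof.
move=> hf x; rewrite {1}(divn_eq x m); elim: (x %/ m)%N => [|q IH].
  by rewrite mul0n add0n.
by rewrite mulSn -addnA addnC hf.
Qed.

Lemma per_addk (T : Type) (m : nat) (f : nat -> T) :
  (forall x, f (x + m)%N = f x) -> forall x k, f (x + k * m)%N = f x.
Proof.
move=> hf x; elim=> [|k IH]; first by rewrite mul0n addn0.
by rewrite mulSn addnCA addnC hf.
Qed.

Section H2.
Variable R : realType.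
Local Notation pt := 'rV[R]_2.

Lemma sum_ind (m x : nat) (F : 'I_m -> pt) (Hx : (x < m)%N) :
  \sum_(j < m) (if x == j :> nat then F j else 0) = F (Ordinal Hx).
Proof.
rewrite (bigD1 (Ordinal Hx)) //= eqxx big1 ?addr0 // => j /negbTE hj.
case: ifP => // /eqP e; move: hj; suff -> : j = Ordinal Hx by rewrite eqxx.
by apply: val_inj; rewrite /= e.
Qed.

Lemma sum_indR (m x : nat) (F : 'I_m -> R) (Hx : (x < m)%N) :
  \sum_(j < m) (if x == j :> nat then F j else 0) = F (Ordinal Hx).
Proof.
rewrite (bigD1 (Ordinal Hx)) //= eqxx big1 ?addr0 // => j /negbTE hj.
case: ifP => // /eqP e; move: hj; suff -> : j = Ordinal Hx by rewrite eqxx.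
by apply: val_inj; rewrite /= e.
Qed.

Variable m : nat.
Hypothesis m0 : (0 < m)%N.
Variable V : nat -> pt.
Hypothesis Vper : forall i, V (i + m)%N = V i.

Lemma hull_comb k (w : 'I_k -> R) (f : 'I_k -> nat) :
  (forall i, 0 <= w i) -> \sum_i w i = 1 ->
  hull V m (\sum_i w i *: V (f i)).
Proof.
move=> w0 w1.
exists (fun j : 'I_m => \sum_i (if (f i %% m)%N == j :> nat then w i else 0)).
split; first by move=> j; apply: sumr_ge0 => i _; case: ifP.
split.
  rewrite exchange_big /= -w1; apply: eq_bigr => i _.
  by rewrite (sum_indR (fun _ => w i) (ltn_pmod (f i) m0)).
rewrite (eq_bigr _ (fun j _ => scaler_suml _ _ _ _)) /=.
rewrite exchange_big /=; apply: eq_bigr => i _.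
under eq_bigr do rewrite (fun_if (fun a => a *: V _)) scale0r.
rewrite (sum_ind (fun j : 'I_m => w i *: V j) (ltn_pmod (f i) m0)) /=.
by rewrite -(per_mod Vper).
Qed.

Lemma hull_vert j : hull V m (V j).
Proof.
have h := @hull_comb 1 (fun _ => 1) (fun _ => j) (fun _ => ler01) (big_ord1 _ _).
by move: h; rewrite big_ord1 scale1r.
Qed.

Lemma hull_le (v : pt) M p : (forall j, det2 (V j) v <= M) -> hull V m p -> det2 p v <= M.
Proof.
move=> hj [w [w0 [w1 ->]]]; rewrite det2_sum.
have -> : M = \sum_i w i * M by rewrite -big_distrl /= w1 mul1r.
by apply: ler_sum => i _; apply: ler_wpM2l.
Qed.

Lemma hull_ge (v : pt) M p : (forall j, M <= det2 (V j) v) -> hull V m p -> M <= det2 p v.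
Proof.
move=> hj [w [w0 [w1 ->]]]; rewrite det2_sum.
have -> : M = \sum_i w i * M by rewrite -big_distrl /= w1 mul1r.
by apply: ler_sum => i _; apply: ler_wpM2l.
Qed.

Lemma hfun_max (v : pt) j0 : (forall j, det2 (V j) v <= det2 (V j0) v) ->
  hfun (hull V m) v = det2 (V j0) v.
Proof.
move=> hj; rewrite /hfun.
set S := (X in sup X).
have S0 : S (det2 (V j0) v) by exists (V j0) => //; apply: hull_vert.
have ub : ubound S (det2 (V j0) v) by move=> y [p hp <-]; apply: hull_le.
apply/le_anti/andP; split; first by apply: ge_sup => //; exists (det2 (V j0) v).
by apply: ub_le_sup => //; exists (det2 (V j0) v).
Qed.

Lemma exists_max (f : nat -> R) : exists j0, forall j, f (j %% m)%N <= f j0.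
Proof.
suff [j0 h] : exists j0, forall j, (j < m)%N -> f j <= f j0.
  by exists j0 => j; apply: h; apply: ltn_pmod.
have gen : forall k, exists j0, forall j, (j < k)%N -> f j <= f j0.
  elim=> [|k [j0 IH]]; first by exists 0%N.
  case: (lerP (f k) (f j0)) => hk.
    exists j0 => j; rewrite ltnS leq_eqVlt => /orP[/eqP->//|]; exact: IH.
  exists k => j; rewrite ltnS leq_eqVlt => /orP[/eqP->//|/IH h].
  exact: (le_trans h (ltW hk)).
exact: gen.
Qed.

Lemma exists_vmax (v : pt) : exists j0, forall j, det2 (V j) v <= det2 (V j0) v.
Proof.
have [j0 h] := exists_max (fun j => det2 (V j) v).
by exists j0 => j; rewrite (per_mod Vper j).
Qed.

End H2.

Ltac vring := apply: pt_eq; rewrite !cE; ring.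

Ltac vfield := apply: pt_eq; rewrite !cE; field; rewrite ?pnatr_eq0 //.

Section G.
Variable R : realType.
Local Notation pt := 'rV[R]_2.

Lemma detN1 (x y : pt) : det2 x y = - det2 y x. Proof. rewrite /det2; ring. Qed.
Lemma detxx (x : pt) : det2 x x = 0. Proof. rewrite /det2; ring. Qed.
Lemma detDl (x y v : pt) : det2 (x + y) v = det2 x v + det2 y v. Proof. rewrite /det2 !cE; ring. Qed.
Lemma detBl (x y v : pt) : det2 (x - y) v = det2 x v - det2 y v. Proof. rewrite /det2 !cE; ring. Qed.
Lemma detNl (x v : pt) : det2 (- x) v = - det2 x v. Proof. rewrite /det2 !cE; ring. Qed.
Lemma detZl a (x v : pt) : det2 (a *: x) v = a * det2 x v. Proof. rewrite /det2 !cE; ring. Qed.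
Lemma detDr (x y v : pt) : det2 v (x + y) = det2 v x + det2 v y. Proof. rewrite /det2 !cE; ring. Qed.
Lemma detBr (x y v : pt) : det2 v (x - y) = det2 v x - det2 v y. Proof. rewrite /det2 !cE; ring. Qed.
Lemma detNr (x v : pt) : det2 v (- x) = - det2 v x. Proof. rewrite /det2 !cE; ring. Qed.
Lemma detZr a (x v : pt) : det2 v (a *: x) = a * det2 v x. Proof. rewrite /det2 !cE; ring. Qed.
Lemma det0l (v : pt) : det2 0 v = 0. Proof. rewrite /det2 !cE; ring. Qed.

Definition detE := (detDl, detBl, detNl, detZl, detDr, detBr, detNr, detZr, det0l).

Lemma rep (T : Type) (m : nat) (f : nat -> T) : (0 < m)%N ->
  (forall x, f (x + m)%N = f x) -> forall i j, exists2 s, (s < m)%N & f j = f (i + s)%N.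
Proof.
move=> m0 hf i j; exists ((j + i * m - i) %% m)%N; first exact: ltn_pmod.
have h2 : forall x, f (i + (x + m))%N = f (i + x)%N by move=> x; rewrite addnA hf.
rewrite -(per_mod h2) -(per_addk hf j i).
have : (i <= i * m)%N by rewrite leq_pmulr.
by move=> h; congr f; lia.
Qed.

Variable n : nat.
Hypothesis hn : (2 <= n)%N.
Variables U P : nat -> pt.
Variable lam : nat -> R.
Hypothesis Uper : forall i, U (i + 2 * n)%N = U i.
Hypothesis Uconv : convex_ccw_polygon U (2 * n).
Hypothesis Usym : forall i, U (i + n)%N = - U i.
Hypothesis Pper : forall i, P (i + 2 * n)%N = P i.
Hypothesis lam_ge0 : forall i, 0 <= lam i.
Hypothesis Pside : forall i, P i.+1 - P i = lam i *: (U i.+1 - U i).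

Local Notation m := (2 * n)%N.
Let m0 : (0 < m)%N. Proof. lia. Qed.
Let m1 : (1 < m)%N. Proof. lia. Qed.

Definition e i := U i.+1 - U i.

Lemma G1 i s : (2 <= s)%N -> (s < m)%N -> 0 < det2 (e i) (U (i + s)%N - U i).
Proof.
move=> s2 sm.
have := Uconv (ltn_pmod i m0) (ltn_pmod (i + s) m0).
have hS : U (i %% m).+1 = U i.+1.
  by rewrite (per_mod Uper (i %% m).+1) (per_mod Uper i.+1) -[(i %% m).+1]addn1 -[i.+1]addn1 modnDml.
rewrite /e hS -(per_mod Uper) -(per_mod Uper); apply.
  apply/negP => /eqP h.
  have : (i + s == i + 0 %[mod m])%N by rewrite addn0 h.
  by rewrite eqn_modDl modn_small // mod0n; lia.
apply/negP => /eqP h.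
have : (i + s == i + 1 %[mod m])%N by rewrite h -[(i %% m).+1]addn1 modnDml.
by rewrite eqn_modDl modn_small // modn_small //; lia.
Qed.

Lemma G0 i s : 0 <= det2 (e i) (U (i + s)%N - U i).
Proof.
have h2 : forall x, U (i + (x + m))%N = U (i + x)%N by move=> x; rewrite addnA Uper.
rewrite (per_mod h2); have := ltn_pmod s m0.
case E: (s %% m)%N => [|[|s']] hs.
- by rewrite addn0 subrr /det2 !cE; lra.
- by rewrite addn1 detxx.
- by apply/ltW/G1 => //; rewrite -E.
Qed.

Lemma eN i : e (i + n)%N = - e i.
Proof. by rewrite /e -addSn !Usym; vring. Qed.

Lemma dpos i : 0 < det2 (U i) (U i.+1).
Proof.
have := G1 i (s:=n) hn (ltac:(lia)).
have -> : det2 (e i) (U (i + n)%N - U i) = 2 * det2 (U i) (U i.+1).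
  by rewrite Usym /e /det2 !cE; ring.
by rewrite pmulr_rgt0.
Qed.

Lemma Epos i r : (1 <= r)%N -> (r < n)%N -> 0 < det2 (e i) (e (i + r)%N).
Proof.
have base : forall k, 0 < det2 (e k) (e k.+1).
  move=> k; have := G1 k (s:=2) (leqnn 2) (ltac:(lia)).
  have -> : e k.+1 = (U (k + 2)%N - U k) - e k by rewrite /e addn2; vring.
  by move=> h; rewrite detBr detxx subr0.
elim: r => [//|r IH] _ hr.
case: r IH hr => [_ _|r IH hr]; first by rewrite addn1 base.
have IH' := IH erefl (ltac:(lia)).
set k := (i + r.+1)%N in IH' *.
rewrite addnS -/k.
rewrite ltNge; apply/negP => hB.
have A := base k.
have X1 : 0 < det2 (e i) (U (i + n)%N - U k.+1).
  have -> : U (i + n)%N - U k.+1 = U (i + (r.+2 + n))%N - U i.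
    rewrite Usym; have -> : U (i + (r.+2 + n))%N = - U k.+1 by rewrite addnA Usym /k addnS.
    by rewrite addrC.
  by apply: G1; lia.
have X2 : 0 <= det2 (e k) (U (i + n)%N - U k.+1).
  have -> : U (i + n)%N - U k.+1 = (U (k + (n - r.+1))%N - U k) - e k.
    have -> : (k + (n - r.+1) = i + n)%N by rewrite /k; lia.
    by rewrite /e opprB addrA subrK.
  by rewrite detBr detxx subr0 G0.
have X3 : 0 <= det2 (e k.+1) (U (i + n)%N - U k.+1).
  have -> : (i + n = k.+1 + (n - r.+2))%N by rewrite /k; lia.
  exact: G0.
have := cramer_s (e i) (e k) (e k.+1) (U (i + n)%N - U k.+1).
rewrite (detN1 (e k.+1)).
set a1 := det2 (e k) _ in A *; set a2 := det2 (e i) (e k.+1) in hB *.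
set a3 := det2 (e i) (e k) in IH' *.
set y1 := det2 (e i) _ in X1 *; set y2 := det2 (e k) (_ - _) in X2 *.
set y3 := det2 (e k.+1) _ in X3 *.
move=> h.
have : 0 < a1 * y1 by apply: mulr_gt0.
have : 0 <= - a2 * y2 by apply: mulr_ge0; lra.
have : 0 <= a3 * y3 by apply: mulr_ge0; lra.
rewrite mulNr. lra.
Qed.


Lemma ES1 i s : (s < n)%N -> det2 (e (i + s)%N) (e i) <= 0.
Proof.
case: s => [_|s hs]; first by rewrite addn0 detxx.
by rewrite detN1 oppr_le0 ltW // Epos.
Qed.

Lemma PS j : P j.+1 = P j + lam j *: e j.
Proof. by rewrite /e -Pside addrC subrK. Qed.

Lemma Amono i d s : (s + d <= n)%N ->
  det2 (P (i + (s + d))%N) (e i) <= det2 (P (i + s)%N) (e i).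
Proof.
elim: d => [|d IH] h; first by rewrite addn0.
have IH2 := IH (ltac:(lia)); apply: (le_trans _ IH2).
rewrite addnS addnS PS detDl detZl !addnA.
have := ES1 i (s:=(s + d)%N) (ltac:(lia)); rewrite addnA => h2.
have := lam_ge0 (i + s + d)%N => h3.
have := mulr_ge0_le0 h3 h2; lra.
Qed.

Lemma Pmax i j : (det2 (P j) (e i) <= det2 (P i) (e i)) /\ (det2 (P (i + n)%N) (e i) <= det2 (P j) (e i)).
Proof.
have [s hs ->] := rep m0 Pper i j.
case: (leqP s n) => hsn.
  split.
    by have := Amono i (s:=0) (d:=s) hsn; rewrite add0n addn0.
  have := Amono i (s:=s) (d:=(n - s)%N) (ltac:(lia)).
  by rewrite subnKC.
have [s' -> hs'] : exists2 s', s = (n + s')%N & (s' < n)%N by exists (s - n)%N; lia.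
have eN' : e (i + n)%N = - e i by rewrite eN.
rewrite addnA; split.
  have := Amono (i + n) (s:=s') (d:=(n - s')%N) (ltac:(lia)).
  rewrite subnKC ?(ltnW hs') //.
  have -> : (i + n + n = i + 2 * n)%N by lia.
  by rewrite Pper eN' !detNr lerN2.
have := Amono (i + n) (s:=0) (d:=s') (ltac:(lia)).
by rewrite eN' !detNr lerN2 add0n addn0.
Qed.


Definition Dd i := P i - P (i + n)%N.

Lemma Dstep i : Dd i.+1 = Dd i + (lam i + lam (i + n)%N) *: e i.
Proof. by rewrite /Dd addSn !PS eN; vring. Qed.

Lemma Dper i : Dd (i + m)%N = Dd i.
Proof. by rewrite /Dd Pper -addnA (addnC m) addnA Pper. Qed.

Lemma Dsym i : Dd (i + n)%N = - Dd i.
Proof.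
rewrite /Dd -addnA addnn -mul2n Pper; vring.
Qed.

Lemma ehull j : hull U m (U j). Proof. have := @hull_vert R m m0 U Uper j. exact. Qed.
Lemma phull j : hull P m (P j). Proof. have := @hull_vert R m m0 P Pper j. exact. Qed.

Lemma Umax i j : det2 (U j) (e i) <= det2 (U i) (e i).
Proof.
have [s _ ->] := rep m0 Uper i j.
have := G0 i s; rewrite detBr (detN1 _ (U (i + s)%N)) (detN1 _ (U i)); lra.
Qed.

Lemma twoone : homothetic (diff_body (hull P m)) (hull U m) ->
  constant_width (hull U m) (hull P m).
Proof.
move=> [c0 [t [t0 hom]]].
have key : forall v, wfun (hull P m) v = det2 c0 v + t * dnorm (hull U m) v.
  move=> v.
  have [j0 hj0] := exists_vmax m0 Pper v.
  have [j1 hj1] := exists_vmax m0 Pper (- v).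
  have [k hk] := exists_vmax m0 Uper v.
  rewrite /wfun (hfun_max m0 Pper hj0) (hfun_max m0 Pper hj1).
  rewrite /dnorm -/(hfun (hull U m) v) (hfun_max m0 Uper hk).
  apply/le_anti/andP; split.
    rewrite detNr -detBl.
    have : diff_body (hull P m) (P j0 - P j1).
      by exists (P j0); [apply: phull | exists (P j1); [apply: phull|]].
    rewrite hom => -[u hu /= <-].
    rewrite detDl detZl lerD2l ler_pM2l //.
    exact: (hull_le (m:=m) (V:=U) hk hu).
  have : diff_body (hull P m) (c0 + t *: U k) by rewrite hom; exists (U k) => //; apply: ehull.
  rewrite -detZl -detDl; move=> [p hp [q hq /= <-]].
  rewrite detBl detNr.
  have := hull_le (m:=m) (V:=P) hj0 hp.
  have := hull_le (m:=m) (V:=P) hj1 hq.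
  rewrite !detNr; lra.
have dN : forall v, dnorm (hull U m) (- v) = dnorm (hull U m) v.
  move=> v; have [k hk] := exists_vmax m0 Uper v.
  rewrite /dnorm -!/(hfun (hull U m) _) (hfun_max m0 Uper hk).
  rewrite (@hfun_max _ _ m0 _ Uper _ (k + n)%N).
    by rewrite Usym detNl detNr opprK.
  move=> j; rewrite Usym detNl (detNr v (U k)) opprK.
  by have := hk (j + n)%N; rewrite Usym detNl -detNr.
exists t => v hv.
have := key (- v); rewrite dN hv.
have -> : wfun (hull P m) (- v) = wfun (hull P m) v by rewrite /wfun opprK addrC.
rewrite key hv detNr; lra.
Qed.


Lemma dUe i : det2 (U i) (e i) = det2 (U i) (U i.+1).
Proof. by rewrite /e detBr detxx subr0. Qed.

Lemma ewidth c : (forall v, dnorm (hull U m) v = 1 -> wfun (hull P m) v = c) ->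
  forall i, det2 (Dd i - c *: U i) (e i) = 0.
Proof.
move=> hc i.
set d := det2 (U i) (e i).
have d0 : 0 < d by rewrite /d dUe dpos.
have di0 : 0 <= d^-1 by rewrite invr_ge0 ltW.
set v := d^-1 *: e i.
have hU : dnorm (hull U m) v = 1.
  rewrite /dnorm -/(hfun (hull U m) v) (@hfun_max _ _ m0 _ Uper _ i).
    by rewrite /v detZr -/d mulVf // gt_eqF.
  by move=> j; rewrite /v !detZr ler_wpM2l // Umax.
have := hc v hU; rewrite /wfun.
rewrite (@hfun_max _ _ m0 _ Pper _ i); last first.
  by move=> j; rewrite /v !detZr ler_wpM2l //; case: (Pmax i j).
rewrite (@hfun_max _ _ m0 _ Pper _ (i + n)%N); last first.
  move=> j; rewrite /v !detNr !detZr lerN2 ler_wpM2l //; case: (Pmax i j) => _ ->.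
  done.
rewrite /v !detNr !detZr => h.
rewrite /Dd detBl detBl detZl -/d.
have : det2 (P i) (e i) - det2 (P (i + n)%N) (e i) = c * d.
  by rewrite -h; field; rewrite gt_eqF.
move=> ->; ring.
Qed.

Lemma onefour c : (forall v, dnorm (hull U m) v = 1 -> wfun (hull P m) v = c) ->
  forall i, Dd i = c *: U i.
Proof.
move=> hc.
have S : forall i, Dd i.+1 = c *: U i.+1.
  move=> i; apply/eqP; rewrite -subr_eq0; apply/eqP.
  apply: (@det2_zero _ _ (e i) (e i.+1)).
  - rewrite Dstep.
    have -> : Dd i + (lam i + lam (i + n)%N) *: e i - c *: U i.+1 =
      (Dd i - c *: U i) + (lam i + lam (i + n)%N - c) *: e i by rewrite /e; vring.
    by rewrite detDl detZl detxx mulr0 addr0 ewidth.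
  - exact: ewidth.
  - by have := Epos i (r:=1) (leqnn 1) (ltac:(lia)); rewrite addn1 => /gt_eqF ->.
move=> i; rewrite -Dper -(Uper i).
have -> : (i + m = (i + m).-1.+1)%N by lia.
exact: S.
Qed.


Lemma ivt (f : nat -> R) s N : 0 <= f s -> f (s + N.+1)%N <= 0 ->
  exists l, 0 <= f l /\ f l.+1 <= 0.
Proof.
elim: N s => [|N IH] s h1 h2; first by exists s; rewrite -addn1.
case: (lerP (f s.+1) 0) => h3; first by exists s.
by apply: (IH s.+1); [apply: ltW | rewrite addSnnS].
Qed.

Lemma hcone y : (forall l, 0 <= det2 (e l) (y - U l)) -> hull U m y.
Proof.
move=> hy.
have [l [hl1 hl2]] : exists l, 0 <= det2 (U l) y /\ det2 (U l.+1) y <= 0.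
  case: (lerP 0 (det2 (U 0) y)) => h0.
    apply: (@ivt (fun l => det2 (U l) y) 0 n.-1) => //.
    by rewrite add0n prednK ?(ltn_trans _ hn) // -(add0n n) Usym detNl oppr_le0.
  apply: (@ivt (fun l => det2 (U l) y) n n.-1) => /=.
    by rewrite -(add0n n) Usym detNl oppr_ge0 ltW.
  rewrite prednK ?(ltn_trans _ hn) //.
  have -> : (n + n = 0 + 2 * n)%N by lia.
  by rewrite Uper ltW.
set d := det2 (U l) (U l.+1).
have d0 : 0 < d by apply: dpos.
have dn0 : d != 0 by rewrite gt_eqF.
set al := - det2 (U l.+1) y / d.
set be := det2 (U l) y / d.
set ga := det2 (e l) (y - U l) / d.
have al0 : 0 <= al by apply: divr_ge0; [rewrite oppr_ge0 | apply: ltW].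
have be0 : 0 <= be by apply: divr_ge0; [ | apply: ltW].
have ga0 : 0 <= ga by apply: divr_ge0; [ | apply: ltW].
have sum1 : al + be + ga = 1.
  rewrite /al /be /ga /e /d /det2 !cE; field; done.
have yE : y = al *: U l + be *: U l.+1.
  by rewrite /al /be /d; apply: pt_eq; rewrite !cE /det2; field.
pose w := fun i : 'I_4 => nth 0 [:: al; be; ga / 2; ga / 2] i.
pose f := fun i : 'I_4 => nth 0%N [:: l; l.+1; 0%N; n] i.
have := @hull_comb R m m0 U Uper 4 w f.
rewrite !big_ord_recl !big_ord0 /= /w /f /=.
have Un : U n = - U 0 by rewrite -{1}(add0n n) Usym.
rewrite Un => h; rewrite yE.
have -> : al *: U l + be *: U l.+1 =
  al *: U l + (be *: U l.+1 + (ga / 2 *: U 0 + (ga / 2 *: - U 0 + 0))) by vring.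
apply: h.
  by case=> -[|[|[|[|//]]]] ? //=; apply: divr_ge0.
rewrite addr0; lra.
Qed.


Lemma threefour :
  (forall i, (i < n)%N -> det2 (P i - P (i + n)%N) (U i - U (i + n)%N) = 0) ->
  exists a : R, forall i, (i < n)%N -> P i - P (i + n)%N = (2 * a) *: (U i - U (i + n)%N).
Proof.
move=> h.
have h' : forall i, (i < n)%N -> det2 (Dd i) (U i) = 0.
  move=> i hi; have := h i hi; rewrite Usym opprK detDr /Dd; lra.
have d1 : det2 (U 0) (U 1) != 0 by rewrite gt_eqF // dpos.
set c := det2 (Dd 0) (U 1) / det2 (U 0) (U 1).
have D0 : Dd 0 = c *: U 0.
  apply/eqP; rewrite -subr_eq0; apply/eqP.
  apply: (det2_zero (a := U 0) (b := U 1)) => //.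
    by rewrite detBl detZl detxx mulr0 subr0 (h' 0%N (ltac:(lia))).
  by rewrite detBl detZl /c mulrAC -mulrA mulfV // mulr1 subrr.
have Dall : forall i, (i < n)%N -> Dd i = c *: U i.
  elim=> [//|i IH] hi.
  have IH' := IH (ltnW hi).
  have := h' _ hi; rewrite Dstep IH'.
  set mu := lam i + lam (i + n)%N.
  have -> : det2 (c *: U i + mu *: e i) (U i.+1) = (c - mu) * det2 (U i) (U i.+1).
    by rewrite /e /det2 !cE; ring.
  move/eqP; rewrite mulf_eq0 (gt_eqF (dpos i)) orbF subr_eq0 => /eqP <-.
  by rewrite /e; vring.
by exists (c / 4) => i hi; rewrite -/(Dd i) Dall // Usym; vfield.
Qed.

Lemma fourthree :
  (exists a : R, forall i, (i < n)%N -> P i - P (i + n)%N = (2 * a) *: (U i - U (i + n)%N)) ->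
  (forall i, (i < n)%N -> det2 (P i - P (i + n)%N) (U i - U (i + n)%N) = 0).
Proof. by move=> [a h] i hi; rewrite h // detZl detxx mulr0. Qed.


Lemma e_neq0 i : e i != 0.
Proof.
apply/eqP => h; have := G1 i (s:=2) (leqnn 2) (ltac:(lia)).
by rewrite h det0l ltxx.
Qed.

Lemma fourtwo : has_interior (hull P m) ->
  (exists a : R, forall i, (i < n)%N -> P i - P (i + n)%N = (2 * a) *: (U i - U (i + n)%N)) ->
  homothetic (diff_body (hull P m)) (hull U m).
Proof.
move=> Pint [a ha].
set t := 4 * a.
have Dlow : forall i, (i < n)%N -> Dd i = t *: U i.
  by move=> i hi; rewrite /Dd ha // Usym /t; vring.
have Dall : forall i, Dd i = t *: U i.
  move=> i; rewrite (per_mod Dper) (per_mod Uper i).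
  have := ltn_pmod i m0; set k := (i %% m)%N => hk.
  case: (ltnP k n) => hkn; first exact: Dlow.
  have -> : k = ((k - n) + n)%N by rewrite subnK.
  by rewrite Dsym Usym Dlow ?scalerN //; lia.
have mu : forall i, lam i + lam (i + n)%N = t.
  move=> i; have := Dstep i; rewrite !Dall => h.
  have : (lam i + lam (i + n)%N - t) *: e i = 0.
    apply/eqP; rewrite scalerBl subr_eq0; apply/eqP.
    have -> : t *: e i = t *: U i.+1 - t *: U i by rewrite /e; vring.
    by rewrite h; vring.
  by move/eqP; rewrite scaler_eq0 (negbTE (e_neq0 i)) orbF subr_eq0 => /eqP.
have t0 : 0 <= t by rewrite -(mu 0%N) addr_ge0.
have tpos : 0 < t.
  rewrite lt_neqAle t0 andbT; apply/negP => /eqP t00.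
  have l0 : forall i, lam i = 0.
    move=> i; have := mu i; rewrite -t00 => h.
    have := lam_ge0 i; have := lam_ge0 (i + n)%N; lra.
  have Pc : forall j, P j = P 0.
    by elim=> [//|j IH]; rewrite PS l0 scale0r addr0.
  have hc : forall x, hull P m x -> x = P 0.
    move=> x [w [_ [w1 ->]]].
    under eq_bigr do rewrite Pc.
    by rewrite -scaler_suml w1 scale1r.
  case: Pint => x0 [eps [eps0 hb]].
  have e2 : 0 < eps ^+ 2 by rewrite exprn_gt0.
  have h1 : x0 = P 0.
    apply: hc; apply: hb; rewrite subrr xc0 yc0 expr0n /= add0r //.
  have h2 : x0 + const_mx (eps / 2) = P 0.
    apply: hc; apply: hb.
    rewrite addrAC subrr add0r /xc /yc !mxE.
    move: e2; rewrite !expr2; lra.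
  have hc2 : (const_mx (eps / 2) : pt) = 0.
    by apply: (addrI x0); rewrite addr0 h2 h1.
  have := congr1 (@xc R) hc2; rewrite xc0 /xc mxE; lra.
exists 0, t; split => //.
apply/seteqP; split => x.
  move=> [p hp [q hq <-]].
  exists (t^-1 *: (p - q)); last by rewrite add0r scalerA mulfV ?scale1r // gt_eqF.
  apply: hcone => l.
  have eD : det2 (e l) (U l) = t^-1 * det2 (e l) (Dd l).
    by rewrite Dall detZr mulrA mulVf ?mul1r // gt_eqF.
  rewrite detBr detZr eD -mulrBr; apply: mulr_ge0; first by rewrite invr_ge0.
  rewrite /Dd (detN1 (e l)) (detN1 (e l)) !detBl.
  have := hull_le (m:=m) (V:=P) (fun j => (Pmax l j).1) hp.
  have := hull_ge (m:=m) (V:=P) (fun j => (Pmax l j).2) hq.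
  lra.
move=> [u [w [w0 [w1 ->]]] <-].
exists (\sum_i w i *: P i); first exact: (@hull_comb R m m0 P Pper m w (fun i => nat_of_ord i)).
exists (\sum_i w i *: P (i + n)%N); first exact: (@hull_comb R m m0 P Pper m w (fun i => (nat_of_ord i + n)%N)).
rewrite -sumrB add0r scaler_sumr; apply: eq_bigr => j _.
by rewrite -scalerBr -/(Dd j) Dall !scalerA mulrC.
Qed.


Lemma onefour' : constant_width (hull U m) (hull P m) ->
  (exists a : R, forall i, (i < n)%N -> P i - P (i + n)%N = (2 * a) *: (U i - U (i + n)%N)).
Proof.
move=> [c hc]; exists (c / 4) => i hi.
by rewrite -/(Dd i) (onefour hc) Usym; vfield.
Qed.

Lemma main_thm : has_interior (hull P m) ->
  [/\ (constant_width (hull U m) (hull P m) <->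
        homothetic (diff_body (hull P m)) (hull U m)),
      (homothetic (diff_body (hull P m)) (hull U m) <->
        (forall i, (i < n)%N -> det2 (P i - P (i + n)%N) (U i - U (i + n)%N) = 0)) &
      ((forall i, (i < n)%N -> det2 (P i - P (i + n)%N) (U i - U (i + n)%N) = 0) <->
        (exists a : R, forall i, (i < n)%N ->
            P i - P (i + n)%N = (2 * a) *: (U i - U (i + n)%N)))].
Proof.
move=> Pint; split.
- split; [move=> h; exact: (fourtwo Pint (onefour' h)) | exact: twoone].
- split; [move=> h; apply: fourthree; apply: onefour'; exact: twoone h
         | move=> h; exact: (fourtwo Pint (threefour h))].
- split; [exact: threefour | exact: fourthree].
Qed.

End G.

Unset Implicit Arguments.

Theorem corollary2p6 (R : realType) (n : nat) (U P : nat -> 'rV[R]_2)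
  (lam : nat -> R)
  (hn : (2 <= n)%N)
  (Uper : forall i, U (i + 2 * n)%N = U i)
  (Uconv : convex_ccw_polygon U (2 * n))
  (Usym : forall i, U (i + n)%N = - U i)
  (Pper : forall i, P (i + 2 * n)%N = P i)
  (Pint : has_interior (hull P (2 * n)))
  (lam_ge0 : forall i, 0 <= lam i)
  (Pside : forall i, P i.+1 - P i = lam i *: (U i.+1 - U i)) :
  [/\ (constant_width (hull U (2 * n)) (hull P (2 * n)) <->
        homothetic (diff_body (hull P (2 * n))) (hull U (2 * n))),
      (homothetic (diff_body (hull P (2 * n))) (hull U (2 * n)) <->
        (forall i, (i < n)%N -> det2 (P i - P (i + n)%N) (U i - U (i + n)%N) = 0)) &
      ((forall i, (i < n)%N -> det2 (P i - P (i + n)%N) (U i - U (i + n)%N) = 0) <->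
        (exists a : R, forall i, (i < n)%N ->
            P i - P (i + n)%N = (2 * a) *: (U i - U (i + n)%N)))].
Proof.
exact: (main_thm hn Uper Uconv Usym Pper lam_ge0 Pside Pint).
Qed.
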